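(* In the network $N$ described in the context, with $3f<n\le 5f$ and $n-f$ odd, suppose the robots run a deterministic cautious algorithm that solves Byzantine convergence with up to $f$ Byzantine robots in the ATOM model under a fully asynchronous scheduler. Then for every distance $d$ with $0<d<B-A$ and every $Border\in\{A,B\}$, the adversary procedure $G2B2(Border,d)$ terminates.
   Context: Model: robots on the real line in the ATOM model (each activated robot performs a full Look–Compute–Move cycle atomically). Robots are anonymous (same deterministic program), oblivious, have no common orientation, and have unlimited visibility with strong multiplicity detection. Byzantine robots behave arbitrarily, with positions chosen by the adversary. A fully asynchronous scheduler only guarantees that each robot is activated infinitely often. Byzantine convergence: for every $\epsilon>0$ there is a time after which all correct robots are pairwise within distance $\epsilon$. Cautious algorithm: every computed destination of a correct robot lies in the range of the correct robots' positions in its last observation. In addition, whenever the correct robots are not colocated, some correct robot later has destination different from its position. Network $N$: $n$ robots, exactly $f$ Byzantine, and $A<B$. - $SetA$: $f$ correct robots at $A$. - $SetB$: $f$ correct robots at $B$. - $SetX$: $n-3f$ correct robots at a common point $X\in(A,B)$. Procedure $G2B2(Border,d)$: first place $(n-3f+1)/2$ Byzantine robots at $Border$ and $(5f-n-1)/2$ Byzantine robots at $X$. Then, while the distance between $X$ and $Border$ exceeds $d$, repeat the following steps. 1. Activate simultaneously all robots at $X$, let them move to their computed destination $D$, and set $X\leftarrow D$. 2. Move one Byzantine robot from $Border$ to $X$. 3. Activate simultaneously all robots at $X$, let them move to their computed destination $D$, and set $X\leftarrow D$. 4. Move one Byzantine robot from $X$ to $Border$. *)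

(* Defs.v *)
From HB Require Import structures.
From mathcomp Require Import all_boot all_order all_algebra.
From mathcomp Require Import reals.
Set Implicit Arguments. Unset Strict Implicit. Unset Printing Implicit Defensive.
Import Order.TTheory GRing.Theory Num.Theory.
Local Open Scope ring_scope.

Section Model.
Variable R : realType.
Variable n : nat.

(* A deterministic algorithm, common to all (anonymous, oblivious) robots:
   it maps the observed multiset of positions (sorted list, expressed in the
   robot's local frame: the robot is at the origin, orientation chosen by the
   adversary) to a destination in that local frame. *)
Definition algorithm := seq R -> R.

Definition config := 'I_n -> R.

(* orientation of a local frame: false = same as global, true = reversed *)
Definition sgn (o : bool) : R := if o then -1 else 1.

(* observation (with strong multiplicity detection, unlimited visibility,
   anonymous robots) taken at position x with local orientation o *)
Definition observe (p : config) (x : R) (o : bool) : seq R :=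
  sort <=%R [seq sgn o * (p j - x) | j <- enum 'I_n].

Definition destAt (alg : algorithm) (p : config) (x : R) (o : bool) : R :=
  x + sgn o * alg (observe p x o).

Definition dest (alg : algorithm) (p : config) (i : 'I_n) (o : bool) : R :=
  destAt alg p (p i) o.

(* An ATOM execution under a fully asynchronous (fair) scheduler, for the
   Byzantine set Byz: pos t is the configuration at time t, act t i says
   whether robot i is activated at step t, fr t i is its local orientation. *)
Definition execution (alg : algorithm) (Byz : {set 'I_n}) (pos : nat -> config)
    (act : nat -> 'I_n -> bool) (fr : nat -> 'I_n -> bool) : Prop :=
  (forall t i, i \notin Byz ->
     pos t.+1 i = if act t i then dest alg (pos t) i (fr t i) else pos t i)
  /\ (forall i, i \notin Byz -> forall t, exists2 t', (t <= t')%N & act t' i).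

Definition in_correct_range (Byz : {set 'I_n}) (p : config) (y : R) : Prop :=
  exists j k, [/\ j \notin Byz, k \notin Byz & p j <= y <= p k].

Definition colocated (Byz : {set 'I_n}) (p : config) : Prop :=
  forall i j, i \notin Byz -> j \notin Byz -> p i = p j.

Definition solves_convergence (f : nat) (alg : algorithm) : Prop :=
  forall Byz : {set 'I_n}, (#|Byz| <= f)%N ->
  forall pos act fr, execution alg Byz pos act fr ->
  forall eps : R, 0 < eps -> exists T, forall t, (T <= t)%N ->
  forall i j, i \notin Byz -> j \notin Byz -> `|pos t i - pos t j| < eps.

Definition cautious (f : nat) (alg : algorithm) : Prop :=
  forall Byz : {set 'I_n}, (#|Byz| <= f)%N ->
  forall pos act fr, execution alg Byz pos act fr ->
  (forall t i, i \notin Byz -> act t i ->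
     in_correct_range Byz (pos t) (dest alg (pos t) i (fr t i)))
  /\ (forall t, ~ colocated Byz (pos t) ->
      exists t', (t <= t')%N /\ exists i, [/\ i \notin Byz, act t' i &
                 dest alg (pos t') i (fr t' i) != pos t' i]).

(* The network N: robots 0..f-1 (SetA, correct) at A, f..2f-1 (SetB, correct)
   at B, 2f..n-f-1 (SetX, correct) at X, and the f Byzantine robots
   n-f..n-1, of which the first k are at Border and the others at X. *)
Definition netconf (f : nat) (A B X Border : R) (k : nat) : config :=
  fun i => if (i < f)%N then A else if (i < 2 * f)%N then B
           else if (i < n - f)%N then X
           else if (i < n - f + k)%N then Border else X.

(* number of Byzantine robots initially placed at Border: (n-3f+1)/2
   (the remaining f - (n-3f+1)/2 = (5f-n-1)/2 are placed at X) *)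
Definition kB (f : nat) : nat := (n - 3 * f + 1) %/ 2.

(* value of X at the start of the m-th iteration of the loop of
   G2B2(Border, d); o j is the orientation used by the robots at X in the
   j-th activation (all robots at X, activated together, see the same thing
   and use the same frame, hence compute the same destination D). *)
Fixpoint g2b2_X (alg : algorithm) (f : nat) (A B X0 Border : R)
    (o : nat -> bool) (m : nat) : R :=
  match m with
  | 0 => X0
  | m'.+1 =>
      let x := g2b2_X alg f A B X0 Border o m' in
      let x1 := destAt alg (netconf f A B x Border (kB f)) x (o (2 * m')%N) in
      (* step 2: one Byzantine robot moves from Border to X;  step 3 *)
      let x2 := destAt alg (netconf f A B x1 Border (kB f).-1) x1
                  (o (2 * m').+1) in
      (* step 4: one Byzantine robot moves back from X to Border *)
      x2
  end.

(* G2B2(Border, d) terminates: the loop condition |X - Border| > d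
   fails at the start of some iteration. *)
Definition g2b2_terminates (alg : algorithm) (f : nat) (A B X0 Border d : R)
    (o : nat -> bool) : Prop :=
  exists m, `|g2b2_X alg f A B X0 Border o m - Border| <= d.

End Model.

(* Main.v *)
Require Import Defs.
From HB Require Import structures.
From mathcomp Require Import all_boot all_order all_algebra.
From mathcomp Require Import reals.
From mathcomp Require Import zify ring lra.
Import Order.TTheory GRing.Theory Num.Theory.
Lemma card_pred_ord n (P : pred nat) : #|[set i : 'I_n | P i]| = count P (iota 0 n).
Proof.
rewrite cardsE cardE /enum_mem size_filter -enumT -val_enum_ord count_map.
by apply: eq_count.
Qed.

Lemma map_iota_const (T : Type) (h : nat -> T) v a l :
  (forall i, (a <= i < a + l)%N -> h i = v) -> map h (iota a l) = nseq l v.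
Proof.
elim: l a => [|l IH] a H //=.
rewrite H; last by lia.
rewrite IH // => i Hi; apply: H; lia.
Qed.

Lemma count_pieces (T : Type) (h : nat -> T) (a : pred T) n f kk v0 v1 v2 v3 v4 :
  (kk <= f)%N -> (3 * f < n)%N ->
  (forall i, (i < f)%N -> h i = v0) ->
  (forall i, (f <= i < 2 * f)%N -> h i = v1) ->
  (forall i, (2 * f <= i < n - f)%N -> h i = v2) ->
  (forall i, (n - f <= i < n - f + kk)%N -> h i = v3) ->
  (forall i, (n - f + kk <= i < n)%N -> h i = v4) ->
  count a (map h (iota 0 n)) =
  (f * a v0 + f * a v1 + (n - 3 * f) * a v2 + kk * a v3 + (f - kk) * a v4)%N.
Proof.
move=> Hk Hn H0 H1 H2 H3 H4.
have -> : n = (f + (f + (n - 3 * f + (kk + (f - kk)))))%N by lia.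
rewrite !iotaD !map_cat !count_cat.
rewrite (@map_iota_const _ _ v0); last by move=> i Hi; apply: H0; lia.
rewrite (@map_iota_const _ _ v1); last by move=> i Hi; apply: H1; lia.
rewrite (@map_iota_const _ _ v2); last by move=> i Hi; apply: H2; lia.
rewrite (@map_iota_const _ _ v3); last by move=> i Hi; apply: H3; lia.
rewrite (@map_iota_const _ _ v4); last by move=> i Hi; apply: H4; lia.
rewrite !count_nseq. lia.
Qed.

Local Open Scope ring_scope.

Lemma count_netconf (R : realType) n f (a : pred R) (u0 u1 u2 u3 x s w0 w1 w2 w3 : R) kk :
  (kk <= f)%N -> (3 * f < n)%N ->
  s * (u0 - x) = w0 -> s * (u1 - x) = w1 -> s * (u2 - x) = w2 -> s * (u3 - x) = w3 ->
  count a [seq s * (@netconf R n f u0 u1 u2 u3 kk j - x) | j <- enum 'I_n] =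
  (f * a w0 + f * a w1 + (n - 3 * f) * a w2 + kk * a w3 + (f - kk) * a w2)%N.
Proof.
move=> Hk Hn E0 E1 E2 E3.
pose h (i : nat) := s * ((if (i < f)%N then u0 else if (i < 2 * f)%N then u1
  else if (i < n - f)%N then u2 else if (i < n - f + kk)%N then u3 else u2) - x).
transitivity (count a (map h (iota 0 n))).
  by rewrite -val_enum_ord -map_comp.
apply: count_pieces => // i Hi; rewrite /h.
- by have -> : (i < f)%N = true by lia.
- have -> : (i < f)%N = false by lia.
  by have -> : (i < 2 * f)%N = true by lia.
- have -> : (i < f)%N = false by lia.
  have -> : (i < 2 * f)%N = false by lia.
  by have -> : (i < n - f)%N = true by lia.
- have -> : (i < f)%N = false by lia.
  have -> : (i < 2 * f)%N = false by lia.
  have -> : (i < n - f)%N = false by lia.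
  by have -> : (i < n - f + kk)%N = true by lia.
- have -> : (i < f)%N = false by lia.
  have -> : (i < 2 * f)%N = false by lia.
  have -> : (i < n - f)%N = false by lia.
  by have -> : (i < n - f + kk)%N = false by lia.
Qed.

Lemma observe_shift (R : realType) n (p q : config R n) x y o :
  (forall j, p j - x = q j - y) -> observe p x o = observe q y o.
Proof. by move=> H; rewrite /observe; congr sort; apply: eq_map => j; rewrite H. Qed.

Lemma sgnN (R : realType) o : sgn R (~~ o) = - sgn R o.
Proof. by case: o; rewrite /sgn /= ?opprK. Qed.

Lemma observe_swap (R : realType) n f (A B Y c : R) (bA : bool) o k :
 (1 <= k <= f)%N -> (2 * k = n - 3 * f + 1)%N -> (3 * f < n)%N ->
 observe (@netconf R n f (if bA then A + c else Y + B + c - A)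
   (if bA then Y + A + c - B else B + c) (Y + c) ((if bA then A else B) + c) k)
   ((if bA then A else B) + c) (~~ o)
 = observe (@netconf R n f A B Y (if bA then A else B) k.-1) Y o.
Proof.
move=> Hk1 Hk H3.
rewrite /observe; apply/perm_sortP; [exact: le_total | exact: le_trans | exact: le_anti |].
apply/permP => a.
have hs := sgnN R o.
case: bA => /=.
- rewrite (@count_netconf R n f a _ _ _ _ _ _ 0 (sgn R o * (B - Y)) (sgn R o * (A - Y)) 0 k); try lia;
    try (rewrite hs; ring).
  rewrite (@count_netconf R n f a _ _ _ _ _ _ (sgn R o * (A - Y)) (sgn R o * (B - Y)) 0 (sgn R o * (A - Y)) k.-1); try lia;
    try ring.
  all: try (case: (a 0); case: (a (sgn R o * (B - Y))); case: (a (sgn R o * (A - Y))); lia).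
- rewrite (@count_netconf R n f a _ _ _ _ _ _ (sgn R o * (A - Y)) 0 (sgn R o * (B - Y)) 0 k); try lia;
    try (rewrite hs; ring).
  rewrite (@count_netconf R n f a _ _ _ _ _ _ (sgn R o * (A - Y)) (sgn R o * (B - Y)) 0 (sgn R o * (B - Y)) k.-1); try lia;
    try ring.
  all: try (case: (a 0); case: (a (sgn R o * (B - Y))); case: (a (sgn R o * (A - Y))); lia).
Qed.


Lemma nc0 (R : realType) n f (u0 u1 u2 u3 : R) kk (i : 'I_n) :
  (i < f)%N -> @netconf R n f u0 u1 u2 u3 kk i = u0.
Proof. by rewrite /netconf => ->. Qed.

Lemma nc1 (R : realType) n f (u0 u1 u2 u3 : R) kk (i : 'I_n) :
  (f <= i < 2 * f)%N -> @netconf R n f u0 u1 u2 u3 kk i = u1.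
Proof.
move=> H; rewrite /netconf.
have -> : (i < f)%N = false by lia.
by have -> : (i < 2 * f)%N = true by lia.
Qed.

Lemma nc2 (R : realType) n f (u0 u1 u2 u3 : R) kk (i : 'I_n) :
  (3 * f < n)%N -> (kk <= f)%N -> ((2 * f <= i < n - f) || (n - f + kk <= i))%N ->
  @netconf R n f u0 u1 u2 u3 kk i = u2.
Proof.
move=> Hn Hk H; rewrite /netconf.
have -> : (i < f)%N = false by lia.
have -> : (i < 2 * f)%N = false by lia.
case: ifP => // H1.
by have -> : (i < n - f + kk)%N = false by lia.
Qed.

Lemma nc3 (R : realType) n f (u0 u1 u2 u3 : R) kk (i : 'I_n) :
  (3 * f < n)%N -> (n - f <= i < n - f + kk)%N ->
  @netconf R n f u0 u1 u2 u3 kk i = u3.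
Proof.
move=> Hn H; rewrite /netconf.
have -> : (i < f)%N = false by lia.
have -> : (i < 2 * f)%N = false by lia.
have -> : (i < n - f)%N = false by lia.
by have -> : (i < n - f + kk)%N = true by lia.
Qed.

Ltac cb b := let hb := fresh "hb" in case: (boolP b) => hb; rewrite ?hb ?(negbTE hb) /=.

Lemma main (R : realType) (n f : nat) (A B X : R) (alg : algorithm R) (bA : bool)
  (o : nat -> bool) (d : R) :
  (3 * f < n)%N -> (n <= 5 * f)%N -> odd (n - f) -> 0 < d ->
  solves_convergence n f alg ->
  g2b2_terminates n alg f A B X (if bA then A else B) d o.
Proof.
move=> H3 H5 Hodd Hd Hconv.
set Bo := if bA then A else B.
set k := kB n f.
have Hk : (2 * k = n - 3 * f + 1)%N.
  have := modn2 (n - f); rewrite Hodd /k /kB => ?; lia.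
have Hk1 : (1 <= k <= f)%N by lia.
pose Xs m := g2b2_X n alg f A B X Bo o m.
pose Ys m := destAt alg (@netconf R n f A B (Xs m) Bo k) (Xs m) (o (2 * m)%N).
pose c := fix c (m : nat) : R := if m is m'.+1 then c m' + Ys m' - Xs m'.+1 else 0.
pose ev m := @netconf R n f (A + c m) (B + c m) (Xs m + c m) (Bo + c m) k.
pose od m := @netconf R n f (if bA then A + c m else Ys m + B + c m - A)
   (if bA then Ys m + A + c m - B else B + c m) (Ys m + c m) (Bo + c m) k.
pose pos t := if odd t then od t./2 else ev t./2.
pose inZ (i : nat) := if bA then (f <= i < 2 * f)%N else (i < f)%N.
pose inQ (i : nat) := (if bA then (i < f)%N else (f <= i < 2 * f)%N) || (n - f <= i < n - f + k)%N.
pose inP (i : nat) := (2 * f <= i < n - f)%N || (n - f + k <= i)%N.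
pose Byz := [set i : 'I_n | inZ i].
pose act t (i : 'I_n) := if odd t then inQ i else inP i.
pose fr t (i : 'I_n) := if odd t then ~~ o t else o t.
have HByz : (#|Byz| <= f)%N.
  rewrite card_pred_ord.
  have -> : count inZ (iota 0 n) = count id (map inZ (iota 0 n)) by rewrite count_map.
  { rewrite (@count_pieces _ inZ id n f k (~~ bA) bA false false false); try lia.
    all: try (move=> i Hi; rewrite /inZ).
    all: cb bA; lia. }
have e0 m : odd (2 * m) = false by rewrite mul2n odd_double.
have e1 m : (2 * m)./2 = m by rewrite mul2n half_double.
have e2 m : (2 * m).+1./2 = m by rewrite mul2n /= uphalf_double.
have e3 m : uphalf (2 * m) = m by rewrite mul2n uphalf_double.
have cor (i : 'I_n) : i \notin Byz -> inQ i || inP i.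
  rewrite inE /inZ /inQ /inP => H; have := ltn_ord i; move: H; cb bA; lia.
have QP (i : 'I_n) : inQ i -> inP i = false.
  rewrite /inQ /inP; cb bA; lia.
have evQ m (i : 'I_n) : inQ i -> ev m i = Bo + c m.
  rewrite /inQ /ev /Bo => /orP [|H]; last by rewrite nc3.
  cb bA => H; [rewrite nc0 | rewrite nc1] => //.
have odQ m (i : 'I_n) : inQ i -> od m i = Bo + c m.
  rewrite /inQ /od /Bo => /orP [|H]; last by rewrite nc3.
  cb bA => H; [rewrite nc0 | rewrite nc1] => //.
have evP m (i : 'I_n) : inP i -> ev m i = Xs m + c m.
  by move=> H; rewrite /ev nc2 //; lia.
have odP m (i : 'I_n) : inP i -> od m i = Ys m + c m.
  by move=> H; rewrite /od nc2 //; lia.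
have Hexec : execution alg Byz pos act fr.
  split.
  - move=> t i Hi.
    have : (exists m, t = 2 * m)%N \/ (exists m, t = (2 * m).+1)%N.
      by case Ho: (odd t); [right|left]; exists t./2; have := odd_double_half t; rewrite Ho mul2n; lia.
    case=> [[m ->] | [m ->]].
    + rewrite /pos /act /fr /= e0 e1 /=.
      case HP: (inP i).
      * rewrite odP // /dest evP //= /destAt.
        rewrite (@observe_shift R n (ev m) (@netconf R n f A B (Xs m) Bo k) _ (Xs m)).
          by rewrite e3 /Ys /destAt; ring.
        move=> j; rewrite /ev /netconf.
        case: (j < f)%N; case: (j < 2 * f)%N; case: (j < n - f)%N; case: (j < n - f + k)%N => /=; ring.
      * have HQ : inQ i by have := cor i Hi; rewrite HP orbF.
        by rewrite e3 odQ // evQ.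
    + have -> : (2 * m).+2 = (2 * m.+1)%N by lia.
      rewrite /pos /act /fr e0 e1 /= e0 /= e3.

      case HQ: (inQ i).
      * rewrite evQ // /dest odQ // /destAt.
        rewrite /od /Bo observe_swap // -/Bo.
        rewrite sgnN /=.
        have -> : Xs m.+1 = Ys m + sgn R (o (2 * m).+1) *
            alg (observe (@netconf R n f A B (Ys m) Bo k.-1) (Ys m) (o (2 * m).+1)) by [].
        ring.
      * have HP : inP i by have := cor i Hi; rewrite HQ.
        rewrite evP // odP //=; ring.
  - move=> i Hi t; case/orP: (cor i Hi) => H.
    + exists (2 * t).+1; first lia.
      by rewrite /act /= e0.
    + exists (2 * t)%N; first lia.
      by rewrite /act e0.
have [T HT] := Hconv Byz HByz pos act fr Hexec d Hd.
exists T.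
have Hi0 : (2 * f < n)%N by lia.
pose i0 := Ordinal Hi0.
have Hj0 : ((if bA then 0 else f) < n)%N by cb bA; lia.
pose j0 := Ordinal Hj0.
have Ni0 : i0 \notin Byz by rewrite inE /inZ /=; cb bA; lia.
have Nj0 : j0 \notin Byz by rewrite inE /inZ /=; cb bA; lia.
have := HT (2 * T)%N ltac:(lia) i0 j0 Ni0 Nj0.
rewrite /pos e0 e1 evP; last by rewrite /inP /=; lia.
rewrite evQ; last by rewrite /inQ /=; cb bA; lia.
have -> : Xs T + c T - (Bo + c T) = Xs T - Bo by ring.
by move/ltW.
Qed.

Theorem lemma3 (R : realType) (n f : nat) (A B X : R) (alg : algorithm R) :
  (3 * f < n)%N -> (n <= 5 * f)%N -> odd (n - f) ->
  A < B -> A < X -> X < B ->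
  cautious n f alg -> solves_convergence n f alg ->
  forall d : R, 0 < d -> d < B - A ->
  forall Border : R, Border = A \/ Border = B ->
  forall o : nat -> bool, g2b2_terminates n alg f A B X Border d o.
Proof.
move=> H3 H5 Hodd _ _ _ _ Hconv d Hd _ Border HB o.
case: HB => ->.
- exact: (@main R n f A B X alg true o d).
- exact: (@main R n f A B X alg false o d).
Qed.
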